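(* For every $n\ge1$, \[ F^{\mathrm{(per)}}_{2n}(2)=\frac{(2n)!}{2\,n!}\cdot\frac{3\,\Gamma(\frac n2+1)}{\Gamma(\frac{3n}{2}+1)},\qquad F^{\mathrm{(per)}}_{2n}(\tfrac12)=2^{-n-1}\,\frac{(2n)!}{2\,n!}\cdot\frac{3\,\Gamma(\frac n2+1)}{\Gamma(\frac{3n}{2}+1)} . \] In particular, for $n$ odd, $F^{\mathrm{(per)}}_{2n}(2)=\dfrac{2^{2n-1}\mathrm{AV}_n^2}{\mathrm{A}_n}$ and $F^{\mathrm{(per)}}_{2n}(\tfrac12)=\dfrac{2^{n-2}\mathrm{AV}_n^2}{\mathrm{A}_n}$.
   Context: $F^{\mathrm{(per)}}_{2n}(x) = \sum_{k=1}^n \binom{n+k-2}{k-1}\frac{(2n-1)!\,(2n-k-1)! }{(3 n-2)!\,(n-k)!}x^k$ (boundary loop generating function of the periodic Temperley–Lieb loop model at loop weight 1, size $2n$). $\mathrm{A}_n=\prod_{j=0}^{n-1}\frac{(3j+1)!}{(n+j)!}$, and $\mathrm{AV}_{2m+1}=\prod_{j=0}^{m-1}(3j+2)\frac{(6j+3)!\,(2j+1)!}{(4j+3)!\,(4j+2)!}$. *)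

(* Defs.v *)
From Stdlib Require Import Reals Lra Lia Arith ZArith.
Open Scope R_scope.

(* gamma_half k = Gamma(k/2) for k >= 1 (positive half-integers), defined by
   Gamma(1/2) = sqrt PI, Gamma(1) = 1, Gamma(x+1) = x Gamma(x).
   gamma_half 0 is a junk value (Gamma has a pole at 0); never used. *)
Fixpoint gamma_half (k : nat) : R :=
  match k with
  | O => 0
  | S O => sqrt PI
  | S (S k') =>
      match k' with
      | O => 1
      | S _ => INR k' / 2 * gamma_half k'
      end
  end.

Fixpoint prodR (f : nat -> R) (n : nat) : R :=
  match n with
  | O => 1
  | S n' => prodR f n' * f n'
  end.

(* coefficient of x^k in F^(per)_{2n}(x), for 1 <= k <= n *)
Definition Fper_coef (n k : nat) : R :=
  C (n + k - 2) (k - 1) *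
  (INR (fact (2 * n - 1)) * INR (fact (2 * n - k - 1)))
  / (INR (fact (3 * n - 2)) * INR (fact (n - k))).

Definition Fper (n : nat) (x : R) : R :=
  sum_f_R0 (fun j => Fper_coef n (S j) * x ^ (S j)) (n - 1).

Definition A_n (n : nat) : R :=
  prodR (fun j => INR (fact (3 * j + 1)) / INR (fact (n + j))) n.

(* AV_{2m+1} = prod_{j=0}^{m-1} (3j+2) (6j+3)!(2j+1)! / ((4j+3)!(4j+2)!).
   AV n is only meaningful for n odd; it uses m = n / 2 (floor). *)
Definition AV (n : nat) : R :=
  prodR (fun j => INR (3 * j + 2) * INR (fact (6 * j + 3)) * INR (fact (2 * j + 1))
                  / (INR (fact (4 * j + 3)) * INR (fact (4 * j + 2))))
        (Nat.div2 n).

(* Main.v *)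
Require Import Defs.
From Stdlib Require Import Reals Lra Lia Arith ZArith.
Open Scope R_scope.

Definition Tjb (j b : nat) : R :=
  INR (fact (2*j+b)) * INR (fact (2*j+2*b+1)) * INR (fact (j+2*b))
  / (INR (fact j) * INR (fact (j+b)) * INR (fact (3*j+3*b+1)) * INR (fact b))
  * 2 ^ (j+1).

Lemma INR_fact_pos k : 0 < INR (fact k).
Proof. apply lt_0_INR, lt_O_fact. Qed.

Lemma factS_R k : INR (fact (S k)) = (INR k + 1) * INR (fact k).
Proof. rewrite fact_simpl, mult_INR, S_INR. reflexivity. Qed.

Definition rho1 (J B : R) : R :=
  (2*J+B+1)*(2*J+2*B+3)*(2*J+2*B+2)*(J+2*B+2)*(J+2*B+1)
  / ((J+B+1)*(3*J+3*B+4)*(3*J+3*B+3)*(3*J+3*B+2)*(B+1)).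
Definition rho2 (J B : R) : R :=
  2*(2*J+B+2)*(2*J+B+1)*(2*J+2*B+3)*(2*J+2*B+2)*(J+2*B+1)
  / ((J+1)*(J+B+1)*(3*J+3*B+4)*(3*J+3*B+3)*(3*J+3*B+2)).

Lemma Tjb_b j b : Tjb j (S b) = Tjb j b * rho1 (INR j) (INR b).
Proof.
  unfold Tjb, rho1.
  replace (2*j+S b)%nat with (S (2*j+b)) by lia.
  replace (2*j+2*S b+1)%nat with (S (S (2*j+2*b+1))) by lia.
  replace (j+2*S b)%nat with (S (S (j+2*b))) by lia.
  replace (j+S b)%nat with (S (j+b)) by lia.
  replace (3*j+3*S b+1)%nat with (S (S (S (3*j+3*b+1)))) by lia.
  rewrite !factS_R.
  rewrite !plus_INR, !mult_INR. simpl (INR 2). simpl (INR 3). simpl (INR 1).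
  pose proof (pos_INR j). pose proof (pos_INR b).
  pose proof (INR_fact_pos (2*j+b)). pose proof (INR_fact_pos (2*j+2*b+1)).
  pose proof (INR_fact_pos (j+2*b)). pose proof (INR_fact_pos j).
  pose proof (INR_fact_pos (j+b)). pose proof (INR_fact_pos (3*j+3*b+1)).
  pose proof (INR_fact_pos b).
  rewrite ?S_INR, ?plus_INR, ?mult_INR. simpl (INR 2); simpl (INR 3); simpl (INR 1). generalize (2 ^ (j+1)); intro P.
  field; repeat split; try lra.
Qed.

Ltac factpos :=
  repeat match goal with
  | |- context [INR (fact ?k)] =>
      lazymatch goal with
      | _ : 0 < INR (fact k) |- _ => fail
      | _ => pose proof (INR_fact_pos k)
      end
  end.

Lemma Tjb_j j b : Tjb (S j) b = Tjb j b * rho2 (INR j) (INR b).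
Proof.
  unfold Tjb, rho2.
  replace (2*S j+b)%nat with (S (S (2*j+b))) by lia.
  replace (2*S j+2*b+1)%nat with (S (S (2*j+2*b+1))) by lia.
  replace (S j+2*b)%nat with (S (j+2*b)) by lia.
  replace (S j+b)%nat with (S (j+b)) by lia.
  replace (3*S j+3*b+1)%nat with (S (S (S (3*j+3*b+1)))) by lia.
  replace (S j + 1)%nat with (S (j+1)) by lia.
  rewrite !factS_R. simpl pow.
  pose proof (pos_INR j). pose proof (pos_INR b). factpos.
  rewrite ?S_INR, ?plus_INR, ?mult_INR. simpl (INR 2); simpl (INR 3); simpl (INR 1). generalize (2 ^ (j+1)); intro P.
  field; repeat split; try lra.
Qed.

Definition Qp (n j : R) : R :=
  (-576 - 4128*n - 12252*n^2 - 19038*n^3 - 16170*n^4 - 7074*n^5 - 1242*n^6)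
  + (1200 + 6420*n + 13680*n^2 + 14583*n^3 + 7803*n^4 + 1674*n^5) * (j+1)
  + (-840 - 3402*n - 4995*n^2 - 3159*n^3 - 729*n^4) * (j+1)^2
  + (240 + 732*n + 702*n^2 + 216*n^3) * (j+1)^3
  + (-24 - 54*n - 27*n^2) * (j+1)^4.

Definition lam (n j : R) : R :=
  j * Qp n j / ((n+j+1)*(n+j)*(2*n-j+2)*(2*n-j+1)*(2*n-j)).

Definition cA (n : R) := 3*(3*n+2)*(3*n+4).
Definition cB (n : R) := 16*(2*n+1)*(2*n+3).

Lemma termI j b :
  let N := INR j + INR b + 1 in
  cA N * Tjb j (S (S b)) - cB N * Tjb j b =
  Tjb (S j) (S b) * lam N (INR j + 1) - Tjb j (S (S b)) * lam N (INR j).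
Proof.
  intro N. rewrite Tjb_j, !Tjb_b. rewrite !S_INR. unfold N.
  pose proof (pos_INR j). pose proof (pos_INR b).
  assert (0 < Tjb j b).
  { unfold Tjb. factpos. pose proof (pow_lt 2 (j+1)). 
    apply Rmult_lt_0_compat; [|lra]. unfold Rdiv.
    apply Rmult_lt_0_compat; [|apply Rinv_0_lt_compat]; repeat apply Rmult_lt_0_compat; lra. }
  set (X := Tjb j b) in *; clearbody X.
  unfold lam, rho1, rho2, cA, cB, Qp.
  field; repeat split; lra.
Qed.

Lemma Tjb_pos j b : 0 < Tjb j b.
Proof.
  unfold Tjb. factpos. pose proof (pow_lt 2 (j+1)).
  apply Rmult_lt_0_compat; [|lra]. unfold Rdiv.
  apply Rmult_lt_0_compat; [|apply Rinv_0_lt_compat]; repeat apply Rmult_lt_0_compat; lra.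
Qed.

Lemma termII n : (2 <= n)%nat ->
  let N := INR n in
  cA N * Tjb n 1 = Tjb (S n) 0 * lam N (N+1) - Tjb n 1 * lam N N.
Proof.
  intros Hn N. rewrite Tjb_j, Tjb_b. unfold N.
  assert (2 <= INR n) by (apply (le_INR 2) in Hn; simpl in Hn; lra).
  pose proof (Tjb_pos n 0).
  set (X := Tjb n 0) in *; clearbody X. simpl (INR 0).
  unfold lam, rho1, rho2, cA, cB, Qp.
  field; repeat split; lra.
Qed.

Lemma termIII n : (2 <= n)%nat ->
  let N := INR n in cA N + lam N (N+1) = 0.
Proof.
  intros Hn N. unfold N.
  assert (2 <= INR n) by (apply (le_INR 2) in Hn; simpl in Hn; lra).
  unfold lam, cA, Qp. field; repeat split; lra.
Qed.

Lemma coefT n j b : (j + b + 1 = n)%nat ->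
  Fper_coef n (S j) * 2 ^ (S j) = Tjb j b.
Proof.
  intro H. subst n. unfold Fper_coef, Tjb, C.
  replace (j+b+1+S j-2)%nat with (2*j+b)%nat by lia.
  replace (S j - 1)%nat with j by lia.
  replace (2*j+b-j)%nat with (j+b)%nat by lia.
  replace (2*(j+b+1)-1)%nat with (2*j+2*b+1)%nat by lia.
  replace (2*(j+b+1)-S j-1)%nat with (j+2*b)%nat by lia.
  replace (3*(j+b+1)-2)%nat with (3*j+3*b+1)%nat by lia.
  replace (j+b+1-S j)%nat with b by lia.
  replace (S j) with (j+1)%nat by lia.
  factpos. field; repeat split; lra.
Qed.

Lemma telescope (f g : nat -> R) (N : nat) :
  (forall i, (i <= N)%nat -> f i = g (S i) - g i) ->
  sum_f_R0 f N = g (S N) - g O.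
Proof.
  induction N as [|N IH]; intro H.
  - simpl. apply H. lia.
  - simpl. rewrite IH by (intros; apply H; lia). rewrite (H (S N)) by lia. ring.
Qed.

Lemma sum_lin (f g : nat -> R) (x y : R) N :
  sum_f_R0 (fun j => x * f j - y * g j) N = x * sum_f_R0 f N - y * sum_f_R0 g N.
Proof. induction N; simpl; [ring| rewrite IHN; ring]. Qed.

Lemma Fper_rec n : (2 <= n)%nat ->
  cA (INR n) * Fper (n+2) 2 = cB (INR n) * Fper n 2.
Proof.
  intro Hn. destruct n as [|m]; [lia|].
  set (N := INR (S m)).
  set (a := fun j => Fper_coef (S m + 2) (S j) * 2 ^ (S j)).
  set (c := fun j => Fper_coef (S m) (S j) * 2 ^ (S j)).
  set (h := fun j => if (j <=? S (S m))%nat then a j * lam N (INR j) else 0).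
  assert (Ha : Fper (S m + 2) 2 = sum_f_R0 a m + a (S m) + a (S (S m))).
  { unfold Fper. replace (S m + 2 - 1)%nat with (S (S m)) by lia. reflexivity. }
  assert (Hc : Fper (S m) 2 = sum_f_R0 c m).
  { unfold Fper. replace (S m - 1)%nat with m by lia. reflexivity. }
  assert (Hmid : sum_f_R0 (fun j => cA N * a j - cB N * c j) m = h (S m) - h O).
  { apply telescope. intros i Hi.
    unfold h. rewrite (proj2 (Nat.leb_le i (S (S m)))) by lia.
    rewrite (proj2 (Nat.leb_le (S i) (S (S m)))) by lia.
    unfold a, c.
    rewrite (coefT (S m + 2) i (S (S (m - i)))) by lia.
    rewrite (coefT (S m + 2) (S i) (S (m - i))) by lia.
    rewrite (coefT (S m) i (m - i)) by lia.
    replace N with (INR i + INR (m - i) + 1).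
    2:{ unfold N. rewrite S_INR, <- plus_INR. f_equal. f_equal. lia. }
    rewrite termI. rewrite S_INR. ring. }
  assert (H2 : cA N * a (S m) = h (S (S m)) - h (S m)).
  { unfold h. rewrite (proj2 (Nat.leb_le (S m) (S (S m)))) by lia.
    rewrite (proj2 (Nat.leb_le (S (S m)) (S (S m)))) by lia.
    unfold a.
    rewrite (coefT (S m + 2) (S m) 1) by lia.
    rewrite (coefT (S m + 2) (S (S m)) 0) by lia.
    unfold N. rewrite (S_INR (S m)). rewrite (termII (S m)) by lia. ring. }
  assert (H3 : cA N * a (S (S m)) = h (S (S (S m))) - h (S (S m))).
  { unfold h. rewrite (proj2 (Nat.leb_le (S (S m)) (S (S m)))) by lia.
    rewrite (proj2 (Nat.leb_gt (S (S (S m))) (S (S m)))) by lia.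
    pose proof (termIII (S m) Hn) as T3. cbv zeta in T3.
    unfold N. rewrite (S_INR (S m)).
    replace (lam (INR (S m)) (INR (S m)+1)) with (- cA (INR (S m))) by lra. ring. }
  assert (H4 : h (S (S (S m))) = 0).
  { unfold h. rewrite (proj2 (Nat.leb_gt (S (S (S m))) (S (S m)))) by lia. reflexivity. }
  assert (H0 : h O = 0). { unfold h, lam. simpl. unfold Rdiv. ring. }
  rewrite Ha, Hc. rewrite sum_lin in Hmid. rewrite !Rmult_plus_distr_l. lra.
Qed.

Definition Tn (n : nat) : R := INR (fact (2 * n)) / (2 * INR (fact n))
             * (3 * gamma_half (n + 2) / gamma_half (3 * n + 2)).

Lemma gh_step k : gamma_half (S (S (S k))) = INR (S k) / 2 * gamma_half (S k).
Proof. reflexivity. Qed.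

Lemma gh_pos k : 0 < gamma_half (S k).
Proof.
  induction k as [k IH] using lt_wf_ind.
  destruct k as [|[|k]].
  - simpl. apply sqrt_lt_R0. apply PI_RGT_0.
  - simpl. lra.
  - rewrite gh_step. pose proof (IH k ltac:(lia)). pose proof (pos_INR (S k)).
    rewrite S_INR in *. pose proof (pos_INR k).
    apply Rmult_lt_0_compat; lra.
Qed.

Ltac evalINR :=
  repeat match goal with
  | |- context [INR ?t] =>
      let v := eval vm_compute in (Z.of_nat t) in
      replace (INR t) with (IZR v) by (rewrite INR_IZR_INZ; f_equal; vm_compute; reflexivity)
  end.

Lemma base3 : Fper 3 2 = Tn 3.
Proof.
  unfold Tn. cbv beta iota zeta delta [Fper Fper_coef C sum_f_R0 Nat.sub].
  simpl gamma_half. evalINR.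
  pose proof (sqrt_lt_R0 PI PI_RGT_0).
  field. lra.
Qed.

Lemma Tn_rec n : cA (INR n) * Tn (n+2) = cB (INR n) * Tn n.
Proof.
  unfold Tn.
  replace (2*(n+2))%nat with (S (S (S (S (2*n))))) by lia.
  replace (n+2+2)%nat with (S (S (S (S n)))) by lia.
  replace (n+2)%nat with (S (S n)) by lia.
  replace (3*S (S n)+2)%nat with (S (S (S (S (S (S (S (3*n+1)))))))) by lia.
  replace (3*n+2)%nat with (S (3*n+1)) by lia.
  rewrite (gh_step (S n)), (gh_step (S (S (S (S (3*n+1)))))),
    (gh_step (S (S (3*n+1)))), (gh_step (3*n+1)).
  rewrite !factS_R.
  pose proof (gh_pos (S n)). pose proof (gh_pos (3*n+1)).
  set (g1 := gamma_half (S (S n))) in *. set (g2 := gamma_half (S (3*n+1))) in *.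
  clearbody g1 g2.
  pose proof (pos_INR n). factpos.
  rewrite ?S_INR, ?plus_INR, ?mult_INR. simpl (INR 2); simpl (INR 3); simpl (INR 1).
  unfold cA, cB.
  field; repeat split; lra.
Qed.

Lemma base1 : Fper 1 2 = Tn 1.
Proof.
  unfold Tn. cbv beta iota zeta delta [Fper Fper_coef C sum_f_R0 Nat.sub].
  simpl gamma_half. evalINR.
  pose proof (sqrt_lt_R0 PI PI_RGT_0).
  field. lra.
Qed.

Lemma base2 : Fper 2 2 = Tn 2.
Proof.
  unfold Tn. cbv beta iota zeta delta [Fper Fper_coef C sum_f_R0 Nat.sub].
  simpl gamma_half. evalINR. field.
Qed.

Lemma part1 n : (1 <= n)%nat -> Fper n 2 = Tn n.
Proof.
  intro Hn.
  assert (H : forall k, Fper (k+1) 2 = Tn (k+1) /\ Fper (k+2) 2 = Tn (k+2)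
                     /\ Fper (k+3) 2 = Tn (k+3)).
  { induction k as [|k [H1 [H2 H3]]].
    - simpl. split; [exact base1|split; [exact base2|exact base3]].
    - replace (S k + 1)%nat with (k+2)%nat by lia.
      replace (S k + 2)%nat with (k+3)%nat by lia.
      replace (S k + 3)%nat with (k+2+2)%nat by lia.
      split; [exact H2|split; [exact H3|]].
      assert (Hp : 0 < cA (INR (k+2))).
      { unfold cA. pose proof (pos_INR (k+2)). nra. }
      apply (Rmult_eq_reg_l (cA (INR (k+2)))); [|lra].
      rewrite Fper_rec by lia. rewrite Tn_rec. rewrite H2. reflexivity. }
  destruct n as [|k]; [lia|]. replace (S k) with (k+1)%nat by lia. apply H.
Qed.

Lemma sum_refl (f : nat -> R) m :
  sum_f_R0 f m = sum_f_R0 (fun j => f (m - j)%nat) m.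
Proof.
  revert f. induction m as [|m IH]; intro f.
  - reflexivity.
  - rewrite (decomp_sum (fun j => f (S m - j)%nat) (S m)) by lia.
    simpl pred. simpl (S m - 0)%nat. simpl sum_f_R0 at 1.
    rewrite (IH f). 
    replace (sum_f_R0 (fun i : nat => f (S m - S i)%nat) m)
       with (sum_f_R0 (fun j : nat => f (m - j)%nat) m).
    + ring.
    + apply sum_eq. intros i _. reflexivity.
Qed.

Lemma Tjb_sym j b : Tjb j b / 2 ^ (j+1) = Tjb b j / 2 ^ (b+1).
Proof.
  unfold Tjb.
  replace (2*b+j)%nat with (j+b+b)%nat by lia.
  replace (2*j+b)%nat with (j+b+j)%nat by lia.
  replace (2*b+2*j+1)%nat with (2*j+2*b+1)%nat by lia.
  replace (b+2*j)%nat with (j+b+j)%nat by lia.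
  replace (j+2*b)%nat with (j+b+b)%nat by lia.
  replace (b+j)%nat with (j+b)%nat by lia.
  replace (3*b+3*j+1)%nat with (3*j+3*b+1)%nat by lia.
  factpos. pose proof (pow_lt 2 (j+1)). pose proof (pow_lt 2 (b+1)).
  field; repeat split; lra.
Qed.

Lemma part2 n : (1 <= n)%nat -> Fper n (1/2) = / 2 ^ (n+1) * Fper n 2.
Proof.
  intro Hn. destruct n as [|m]; [lia|]. unfold Fper.
  replace (S m - 1)%nat with m by lia.
  rewrite sum_refl with (f := fun j => Fper_coef (S m) (S j) * 2 ^ S j).
  rewrite scal_sum. apply sum_eq. intros j Hj.
  pose proof (coefT (S m) j (m - j) ltac:(lia)) as E1.
  pose proof (coefT (S m) (m - j) j ltac:(lia)) as E2.
  rewrite E2.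
  replace (Fper_coef (S m) (S j)) with (Tjb j (m-j) / 2 ^ (j+1)).
  2:{ rewrite <- E1. replace (S j) with (j+1)%nat by lia. field. apply pow_nonzero. lra. }
  rewrite Tjb_sym.
  replace (S m + 1)%nat with ((m - j + 1) + S j)%nat by lia.
  rewrite (pow_add 2 (m - j + 1) (S j)). unfold Rdiv. rewrite Rmult_1_l, pow_inv, Rinv_mult. ring.
Qed.

Definition Ff (k : nat) : R := INR (fact k).
Definition Pp (k n : nat) : R := prodR (fun j => Ff (k + j)) n.

Lemma prodR_pos (f : nat -> R) n : (forall j, 0 < f j) -> 0 < prodR f n.
Proof. intro H. induction n; simpl; [lra|]. apply Rmult_lt_0_compat; auto. Qed.

Lemma prodR_div (u v : nat -> R) n : (forall j, 0 < v j) ->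
  prodR (fun j => u j / v j) n = prodR u n / prodR v n.
Proof.
  intro H. induction n; simpl; [field|].
  rewrite IHn. pose proof (prodR_pos v n H). pose proof (H n).
  field; split; lra.
Qed.

Lemma P_shift k n : Pp (S k) n * Ff k = Ff (k + n) * Pp k n.
Proof.
  unfold Pp. induction n.
  - cbn [prodR]. rewrite Nat.add_0_r. ring.
  - cbn [prodR].
    assert (E: Ff (k + S n) = Ff (S k + n)) by (f_equal; lia).
    rewrite E.
    transitivity (prodR (fun j : nat => Ff (S k + j)) n * Ff k * Ff (S k + n)); [ring|].
    rewrite IHn. ring.
Qed.

Lemma F_pos k : 0 < Ff k.
Proof. apply INR_fact_pos. Qed.

Lemma An_split k : A_n k = prodR (fun j => Ff (3*j+1)) k / Pp k k.
Proof.
  unfold A_n, Pp. apply prodR_div. intro; apply F_pos.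
Qed.

Lemma FS k : Ff (S k) = (INR k + 1) * Ff k.
Proof. apply factS_R. Qed.

Lemma Pp_S k m : Pp k (S m) = Pp k m * Ff (k + m).
Proof. reflexivity. Qed.

Lemma A_rec n : A_n (n+2) = A_n n * (Ff (3*n+1) * Ff (3*n+4) * Ff n * Ff (n+1))
   / (Ff (2*n) * Ff (2*n+1) * Ff (2*n+2) * Ff (2*n+3)).
Proof.
  rewrite !An_split.
  replace (n+2)%nat with (S (S n)) by lia.
  rewrite !Pp_S. cbn [prodR].
  pose proof (P_shift (S n) n) as E1. pose proof (P_shift n n) as E2.
  replace (3 * S n + 1)%nat with (3*n+4)%nat by lia.
  replace (S (S n) + n)%nat with (2*n+2)%nat by lia.
  replace (S (S n) + S n)%nat with (2*n+3)%nat by lia.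
  replace (S n + n)%nat with (2*n+1)%nat in E1 by lia.
  replace (n + n)%nat with (2*n)%nat in E2 by lia.
  assert (HP : 0 < Pp n n) by (apply prodR_pos; intro; apply F_pos).
  assert (HP1 : 0 < Pp (S n) n) by (apply prodR_pos; intro; apply F_pos).
  assert (HP2 : 0 < Pp (S (S n)) n) by (apply prodR_pos; intro; apply F_pos).
  assert (HX : 0 < prodR (fun j => Ff (3*j+1)) n) by (apply prodR_pos; intro; apply F_pos).
  pose proof (F_pos n). pose proof (F_pos (S n)). pose proof (F_pos (2*n)).
  pose proof (F_pos (2*n+1)). pose proof (F_pos (2*n+2)). pose proof (F_pos (2*n+3)).
  pose proof (F_pos (3*n+1)). pose proof (F_pos (3*n+4)).
  replace (n+1)%nat with (S n) by lia.
  set (X := prodR (fun j => Ff (3*j+1)) n) in *.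
  set (Y2 := Pp (S (S n)) n) in *. set (Y1 := Pp (S n) n) in *. set (Y := Pp n n) in *.
  clearbody X Y Y1 Y2.
  replace Y2 with (Ff (2*n+1) * Y1 / Ff (S n)) by (field_simplify_eq; [lra|lra]).
  replace Y1 with (Ff (2*n) * Y / Ff n) by (field_simplify_eq; [lra|lra]).
  field. repeat split; lra.
Qed.

Lemma odd_closed p :
  Tn (2*p+1) = 2 ^ (2*(2*p+1)-1) * AV (2*p+1) ^ 2 / A_n (2*p+1).
Proof.
  induction p as [|p IH].
  - unfold Tn, AV, A_n. simpl. simpl gamma_half. evalINR.
    pose proof (sqrt_lt_R0 PI PI_RGT_0). field. lra.
  - set (n := (2*p+1)%nat) in *.
    replace (2 * S p + 1)%nat with (n+2)%nat by (unfold n; lia).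
    assert (HA : 0 < cA (INR n)) by (unfold cA; pose proof (pos_INR n); nra).
    assert (HT : Tn (n+2) = cB (INR n) * Tn n / cA (INR n)).
    { rewrite <- Tn_rec. field. lra. }
    rewrite HT, IH, A_rec.
    assert (HAV : AV (n+2) = AV n * (INR (3*p+2) * Ff (6*p+3) * Ff (2*p+1)
                  / (Ff (4*p+3) * Ff (4*p+2)))).
    { unfold AV, n. replace (2*p+1+2)%nat with (S (2*(S p))) by lia.
      replace (2*p+1)%nat with (S (2*p)) by lia.
      rewrite !Nat.div2_succ_double. cbn [prodR]. unfold Ff.
      replace (S (2*p)) with (2*p+1)%nat by lia. reflexivity. }
    rewrite HAV.
    replace (2*(n+2)-1)%nat with ((2*n-1)+4)%nat by (unfold n; lia).
    rewrite pow_add.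
    assert (HAn : 0 < A_n n).
    { rewrite An_split. apply Rdiv_lt_0_compat; apply prodR_pos; intro; apply F_pos. }
    assert (HAV0 : 0 < AV n).
    { unfold AV. apply prodR_pos. intro j. pose proof (pos_INR (3*j+2)).
      assert (0 < INR (3*j+2)) by (apply lt_0_INR; lia).
      factpos. apply Rdiv_lt_0_compat; repeat apply Rmult_lt_0_compat; lra. }
    unfold n in *.
    replace (3*(2*p+1)+1)%nat with (S (6*p+3)) by lia.
    replace (3*(2*p+1)+4)%nat with (S (S (S (S (6*p+3))))) by lia.
    replace (2*p+1+1)%nat with (S (2*p+1)) by lia.
    replace (2*(2*p+1))%nat with (4*p+2)%nat by lia.
    replace (4*p+2+1)%nat with (S (4*p+2)) by lia.
    replace (4*p+2+2)%nat with (S (S (4*p+2))) by lia.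
    replace (4*p+2+3)%nat with (S (S (S (4*p+2)))) by lia.
    replace (4*p+3)%nat with (S (4*p+2)) by lia.
    rewrite !FS.
    pose proof (F_pos (6*p+3)). pose proof (F_pos (2*p+1)). pose proof (F_pos (4*p+2)).
    pose proof (pos_INR p).
    set (X := A_n (2*p+1)) in *. set (Y := AV (2*p+1)) in *.
    set (W := 2 ^ (2*(2*p+1)-1)). clearbody X Y W.
    unfold cA, cB.
    rewrite ?S_INR, ?plus_INR, ?mult_INR. simpl (INR 1); simpl (INR 2); simpl (INR 3);
      simpl (INR 4); simpl (INR 6).
    field. repeat split; try lra. 
Qed.

Lemma pw n : (1 <= n)%nat ->
  powerRZ 2 (Z.of_nat n - 2) * 2 ^ (n+1) = 2 ^ (2*n-1).
Proof.
  intro H. rewrite !pow_powerRZ, <- powerRZ_add by lra. f_equal. lia.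
Qed.

Theorem mainTheorem5 (n : nat) (hn : (1 <= n)%nat) :
  Fper n 2 = INR (fact (2 * n)) / (2 * INR (fact n))
             * (3 * gamma_half (n + 2) / gamma_half (3 * n + 2))
  /\ Fper n (1 / 2) = / 2 ^ (n + 1) * (INR (fact (2 * n)) / (2 * INR (fact n))
             * (3 * gamma_half (n + 2) / gamma_half (3 * n + 2)))
  /\ (Nat.odd n = true ->
        Fper n 2 = 2 ^ (2 * n - 1) * AV n ^ 2 / A_n n
        /\ Fper n (1 / 2) = powerRZ 2 (Z.of_nat n - 2) * AV n ^ 2 / A_n n).
Proof.
  pose proof (part1 n hn) as H1. pose proof (part2 n hn) as H2.
  unfold Tn in H1.
  split; [exact H1|]. split; [rewrite H2, H1; reflexivity|].
  intro Hodd. apply Nat.odd_spec in Hodd. destruct Hodd as [p Hp].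
  pose proof (odd_closed p) as H3. rewrite <- Hp in H3. fold (Tn n) in H1.
  rewrite H1, H3. split; [reflexivity|].
  rewrite H2, H1, H3, <- (pw n hn).
  pose proof (pow_lt 2 (n+1) ltac:(lra)).
  field. split; [|lra].
  rewrite An_split. apply Rgt_not_eq, Rdiv_lt_0_compat; apply prodR_pos; intro; apply F_pos.
Qed.
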